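(* Let $Y=y[0,\dots,A-1]$ and $Z=z[0,\dots,B-1]$ ($A,B\ge1$) be finite sequences with values in a totally ordered set, each regarded on a linear domain, and let $X=x[0,\dots,A+B-1]$ be the sequence obtained by gluing $Y$ and $Z$, i.e. $x[i]=y[i]$ for $i<A$ and $x[A+j]=z[j]$, with $A-1$ and $A$ made adjacent. Consider the boundary extrema at the glue point: the flat of $Y$ containing $y[A-1]$ and the flat of $Z$ containing $z[0]$. If both are local minima (respectively both are local maxima), then the number of local minima (respectively local maxima) of $X$ equals the number of local minima (respectively local maxima) of $Y$ plus that of $Z$, minus one.
   Context: For a sequence on a linear domain (index $i$ adjacent to $i+1$), a flat is a maximal run of consecutive indices with equal value $l$; its outer neighbours are the (at most two) indices adjacent to the run but not in it. A flat is a local minimum if all its existing outer neighbours have value $>l$, and a local maximum if all its existing outer neighbours have value $<l$. Flats at the ends of the domain (boundary extrema) are classified by their single outer neighbour, and a flat with no outer neighbour (a constant sequence) is counted both as a local minimum and a local maximum. The number of local minima (maxima) is the number of flats that are local minima (maxima). *)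

(* Defs.v *)
From mathcomp Require Import all_boot all_order.
Set Implicit Arguments. Unset Strict Implicit. Unset Printing Implicit Defensive.
Import Order.TTheory.
Local Open Scope order_scope.

(* A finite sequence of length n is a function x : nat -> T, of which only the
   values x 0, ..., x (n-1) matter (linear domain: k adjacent to k+1). *)
Section Flats.
Context {d : Order.disp_t} {T : orderType d}.

Definition is_flat (n : nat) (x : nat -> T) (i j : nat) : bool :=
  [&& (i <= j)%N, (j < n)%N,
      [forall k : 'I_n, ((i <= k) && (k <= j))%N ==> (x k == x i)],
      (i == 0%N) || (x i.-1 != x i)
    & (j.+1 == n) || (x j.+1 != x i)].

Definition is_min_flat n (x : nat -> T) i j : bool :=
  [&& is_flat n x i j, (i == 0%N) || (x i < x i.-1)
    & (j.+1 == n) || (x i < x j.+1)].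

Definition is_max_flat n (x : nat -> T) i j : bool :=
  [&& is_flat n x i j, (i == 0%N) || (x i.-1 < x i)
    & (j.+1 == n) || (x j.+1 < x i)].

Definition num_min n (x : nat -> T) : nat :=
  #|[set p : 'I_n * 'I_n | is_min_flat n x p.1 p.2]|.
Definition num_max n (x : nat -> T) : nat :=
  #|[set p : 'I_n * 'I_n | is_max_flat n x p.1 p.2]|.

Definition flat_at_is_min n (x : nat -> T) (k : nat) : Prop :=
  exists i j, [&& (i <= k)%N, (k <= j)%N & is_min_flat n x i j].
Definition flat_at_is_max n (x : nat -> T) (k : nat) : Prop :=
  exists i j, [&& (i <= k)%N, (k <= j)%N & is_max_flat n x i j].

Definition glue (A : nat) (y z : nat -> T) : nat -> T :=
  fun i => if (i < A)%N then y i else z (i - A)%N.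
End Flats.

(* Main.v *)
Require Import Defs.
From mathcomp Require Import all_boot all_order zify.
Set Implicit Arguments. Unset Strict Implicit. Unset Printing Implicit Defensive.
Import Order.TTheory.

Section S.
Context {d : Order.disp_t} {T : orderType d}.
Implicit Types (x y z : nat -> T).

Lemma minP n x i j : reflect [/\ (i <= j)%N, (j < n)%N,
   (forall k, (i <= k <= j)%N -> x k = x i),
   (i == 0%N) || (x i < x i.-1)%O & (j.+1 == n) || (x i < x j.+1)%O]
  (is_min_flat n x i j).
Proof.
rewrite /is_min_flat /is_flat; apply: (iffP idP).
  case/and3P => /and5P [ij jn /forallP H _ _] l r; split=> // k /andP[ik kj].
  have kn : (k < n)%N by apply: leq_ltn_trans jn.
  by move: (H (Ordinal kn)) => /= /implyP; rewrite ik kj => /(_ isT) /eqP.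
case=> ij jn H l r; rewrite ij jn l r /= !andbT; apply/and3P; split.
- by apply/forallP => k; apply/implyP => /H ->.
- by case/orP: l => [->//|/gt_eqF ->]; rewrite orbT.
- by case/orP: r => [->//|/gt_eqF ->]; rewrite orbT.
Qed.

Lemma min_overlap n x i j i' j' k : is_min_flat n x i j -> is_min_flat n x i' j' ->
  (i <= k <= j)%N -> (i' <= k <= j')%N -> i = i' /\ j = j'.
Proof.
move=> /minP [ij jn H l r] /minP [ij' jn' H' l' r'] ikj ikj'.
have Hi : forall i j i' j', (i <= k <= j)%N -> (i' <= k <= j')%N ->
   (forall k, (i <= k <= j)%N -> x k = x i) ->
   (i' == 0%N) || (x i' < x i'.-1)%O -> (i < i')%N -> False.
  move=> a b a' b' /andP[ak kb] /andP[ak' kb'] Ha la lt.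
  have a'0 : a' != 0%N by rewrite -lt0n (leq_ltn_trans _ lt).
  move: la; rewrite (negbTE a'0) /= (Ha a') ?(Ha a'.-1) ?ltxx //.
    by rewrite -ltnS prednK ?lt0n // lt (leq_trans _ kb) // (leq_trans _ ak') // leq_pred.
  by rewrite (ltnW lt) (leq_trans ak') .
have Hj : forall i j i' j', (i <= k <= j)%N -> (i' <= k <= j')%N ->
   (forall k, (i <= k <= j)%N -> x k = x i) -> (j < n)%N -> (i' <= k <= j')%N ->
   (forall k, (i' <= k <= j')%N -> x k = x i') ->
   (j'.+1 == n) || (x i' < x j'.+1)%O -> (j' < j)%N -> False.
  move=> a b a' b' /andP[ak kb] /andP[ak' kb'] Ha bn _ Ha' ra lt.
  have : (b'.+1 == n) = false by apply/negbTE; rewrite neq_ltn (leq_ltn_trans lt bn).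
  move=> e; move: ra; rewrite e /=.
  rewrite (Ha b'.+1) ?lt ?(leq_trans ak) //; last by apply: leq_trans kb' _.
  rewrite -(Ha' k) ?ak' ?kb' // (Ha k) ?ak ?kb //.
  by rewrite ltxx.
split.
  case: (ltngtP i i') => // lt.
  - by case: (Hi _ _ _ _ ikj ikj' H l' lt).
  - by case: (Hi _ _ _ _ ikj' ikj H' l lt).
case: (ltngtP j j') => // lt.
- by case: (Hj _ _ _ _ ikj' ikj H' jn' ikj H r lt).
- by case: (Hj _ _ _ _ ikj ikj' H jn ikj' H' r' lt).
Qed.

Lemma min_prefix n m x y i j : (forall k, (k < m)%N -> x k = y k) ->
  (j.+1 < m)%N -> (j.+1 < n)%N -> is_min_flat n x i j = is_min_flat m y i j.
Proof.
move=> E jm jn; apply/minP/minP => -[ij _ H l r].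
- have jm' : (j < m)%N by apply: ltnW.
  have im : (i < m)%N by apply: leq_ltn_trans ij jm'.
  have im1 : (i.-1 < m)%N by apply: leq_ltn_trans (leq_pred _) im.
  split=> //.
  + move=> k /andP[ik kj]; rewrite -!E ?H ?ik ?kj //; exact: leq_ltn_trans kj jm'.
  + by rewrite -!E.
  + by move: r; rewrite (ltn_eqF jn) (ltn_eqF jm) -!E.
- have jm' : (j < m)%N by apply: ltnW.
  have im : (i < m)%N by apply: leq_ltn_trans ij jm'.
  have im1 : (i.-1 < m)%N by apply: leq_ltn_trans (leq_pred _) im.
  split=> //; first exact: ltnW.
  + move=> k /andP[ik kj]; rewrite !E ?H ?ik ?kj //; exact: leq_ltn_trans kj jm'.
  + by rewrite !E.
  + by move: r; rewrite (ltn_eqF jn) (ltn_eqF jm) !E.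
Qed.

Lemma min_shift A B x z i j : (forall k, x (k + A) = z k) -> (0 < i)%N ->
  is_min_flat (A + B) x (i + A) (j + A) = is_min_flat B z i j.
Proof.
move=> E i0; have i0' : (i + A == 0)%N = false by rewrite addn_eq0 (negbTE (lt0n_neq0 i0)).
have iA : (i + A).-1 = i.-1 + A by rewrite -subn1 addnC -addnBA ?subn1 // addnC.
have e1 : ((j + A).+1 == A + B) = (j.+1 == B) by rewrite -addSn addnC eqn_add2l.
apply/minP/minP => -[ij jn H l r].
- split.
  + by rewrite -(leq_add2r A).
  + by rewrite -(ltn_add2l A) addnC.
  + move=> k /andP[ik kj]; rewrite -!E; apply: H; by rewrite !leq_add2r ik kj.
  + by move: l; rewrite i0' iA !E (gtn_eqF i0).
  + by move: r; rewrite e1 -addSn !E.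
- split.
  + by rewrite leq_add2r.
  + by rewrite addnC ltn_add2l.
  + move=> k /andP[ik kj].
    have kA : (A <= k)%N by apply: leq_trans ik; rewrite leq_addl.
    rewrite -(subnK kA) E E; apply: H.
    by rewrite -(leq_add2r A) subnK // ik -(leq_add2r A) subnK.
  + by rewrite i0' iA !E; move: l; rewrite (gtn_eqF i0).
  + by rewrite e1 -addSn !E.
Qed.

Lemma sum1 (P : pred nat) m n p : (m <= p < n)%N -> P p ->
  (forall i, (m <= i < n)%N -> P i -> i = p) -> \sum_(m <= i < n) (P i : nat) = 1%N.
Proof.
move=> pr Pp U.
rewrite (bigD1_seq p) ?mem_index_iota ?iota_uniq //= Pp big1_seq // => i /andP[ip].
rewrite mem_index_iota => /U; case: (P i) => // /(_ isT) e.
by rewrite e eqxx in ip.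
Qed.

Lemma sum2 (P : nat -> nat -> bool) m n m' n' p q : (m <= p < n)%N -> (m' <= q < n')%N -> P p q ->
  (forall i j, (m <= i < n)%N -> (m' <= j < n')%N -> P i j -> i = p /\ j = q) ->
  \sum_(m <= i < n) \sum_(m' <= j < n') (P i j : nat) = 1%N.
Proof.
move=> pr qr Ppq U.
rewrite (eq_big_nat _ _ (F2 := fun i => ((i == p) : nat))).
  apply: (@sum1 (fun i => i == p)) pr (eqxx p) _ => i _ /eqP //.
move=> i ir; case: eqP => [->|ne].
  by apply: (@sum1 (fun j => P p j)) qr Ppq _ => j jr /(U _ _ pr jr) [].
rewrite big1_seq // => j /andP[_]; rewrite mem_index_iota => jr.
case Pij: (P i j) => //; by case: (U _ _ ir jr Pij).
Qed.

Lemma num_minE n x : num_min n x = \sum_(0 <= i < n) \sum_(0 <= j < n) (is_min_flat n x i j : nat).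
Proof.
rewrite /num_min big_mkord; under eq_bigr do rewrite big_mkord.
rewrite pair_bigA /= -sum1_card big_mkcond /=; apply: eq_bigr => p _.
by rewrite inE; case: is_min_flat.
Qed.

Lemma last1 n (F : nat -> nat) : (0 < n)%N ->
  \sum_(0 <= j < n) F j = \sum_(0 <= j < n.-1) F j + F n.-1.
Proof. by case: n => //= n _; rewrite big_nat_recr. Qed.

Lemma main_min A B x y z : (0 < A)%N -> (0 < B)%N ->
  (forall k, (k < A)%N -> x k = y k) -> (forall k, x (k + A) = z k) ->
  flat_at_is_min A y A.-1 -> flat_at_is_min B z 0 ->
  num_min (A + B) x = (num_min A y + num_min B z - 1)%N.
Proof.
move=> A0 B0 Ex Sx [a [a' /and3P[aA Aa' Ya]]] [b0 [b /and3P[b00 _ Zb]]].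
have XA : x A = z 0 by rewrite -(Sx 0) add0n.
have eA : A.-1.+1 = A by rewrite prednK.
have a'E : a' = A.-1.
  apply/eqP; rewrite eqn_leq Aa' andbT -ltnS eA.
  by case/minP: Ya.
subst a'; move: b00; rewrite leqn0 => /eqP ?; subst b0.
have [aA1 _ Hy ly _] := minP _ _ _ _ Ya.
have [_ bB Hz _ rz] := minP _ _ _ _ Zb.
have yaE : y a = y A.-1 by rewrite (Hy A.-1) // aA1 leqnn.
have aA' : (a < A)%N by rewrite -eA ltnS.
have xa : x a = y a by rewrite Ex.
rewrite !num_minE.
set T1 := \sum_(0 <= i < A) \sum_(0 <= j < A.-1) (is_min_flat A y i j : nat).
set T2 := \sum_(1 <= i < B) \sum_(0 <= j < B) (is_min_flat B z i j : nat).
have hY : \sum_(0 <= i < A) \sum_(0 <= j < A) (is_min_flat A y i j : nat) = (T1 + 1)%N.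
  rewrite /T1.
  rewrite -(@sum1 (fun i => is_min_flat A y i A.-1) 0 A a) //; last first.
    by move=> i _ Yi; case: (min_overlap Yi Ya (k := A.-1)) => //;
      rewrite leqnn andbT; case/minP: Yi.
  rewrite -big_split; apply: eq_bigr => i _; exact: last1.
have hZ : \sum_(0 <= i < B) \sum_(0 <= j < B) (is_min_flat B z i j : nat) = (1 + T2)%N.
  rewrite big_ltn // (@sum1 (fun j => is_min_flat B z 0 j) 0 B b) //.
  by move=> j _ Zj; case: (min_overlap Zj Zb (k := 0)) => //; case/minP: Zj.
have hX : \sum_(0 <= i < A + B) \sum_(0 <= j < A + B) (is_min_flat (A + B) x i j : nat)
   = (T1 + (1 + T2))%N.
  have AB1 : (A.-1 <= A + B)%N by apply: leq_trans (leq_pred _) (leq_addr _ _).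
  under eq_bigr do rewrite (big_cat_nat (leq0n A.-1) AB1).
  rewrite big_split /=; congr (_ + _).
    rewrite (big_cat_nat (leq0n A) (leq_addr B A)) /=.
    rewrite [X in (_ + X)%N]big1_seq ?addn0; last first.
      move=> i /andP[_]; rewrite mem_index_iota => /andP[Ai _].
      rewrite big1_seq // => j /andP[_]; rewrite mem_index_iota => /andP[_ jA].
      case Pij: is_min_flat => //; case/minP: Pij => ij _ _ _ _.
      have : (i < A)%N by apply: leq_ltn_trans ij (leq_trans jA (leq_pred _)).
      by rewrite ltnNge Ai.
    apply: eq_big_nat => i _; apply: eq_big_nat => j /andP[_ jA].
    have jA' : (j.+1 < A)%N by rewrite -eA ltnS.
    rewrite (min_prefix (m := A) (y := y)) //.
    exact: leq_trans jA' (leq_addr _ _).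
  have AA : (A.+1 <= A + B)%N by rewrite -addn1 leq_add2l.
  rewrite (big_cat_nat (leq0n A.+1) AA) /=; congr (_ + _).
    have A1A : (A.-1 < A)%N by rewrite -[X in (_ < X)%N]eA.
    have A1AB : (A.-1 < A + B)%N by rewrite ltn_addr.
    have AAB : (A == A + B) = false by rewrite -{1}[A]addn0 eqn_add2l; case: (B) B0.
    have ya1 : x A.-1 = y A.-1 by rewrite Ex.
    have xa1 : x a.-1 = y a.-1 by rewrite Ex // (leq_ltn_trans (leq_pred a) aA').
    case: (ltgtP (y A.-1) (z 0)) => cmp.
    - have C : is_min_flat (A + B) x a A.-1.
        apply/minP; split => //.
        + move=> k /andP[ak kA]; have kA' : (k < A)%N by apply: leq_ltn_trans kA A1A.
          by rewrite !Ex ?Hy ?ak ?kA.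
        + by rewrite xa xa1.
        + by rewrite eA AAB XA xa yaE cmp orbT.
      apply: (@sum2 (fun i j => is_min_flat (A + B) x i j) _ _ _ _ a A.-1) => //.
      + by rewrite leq0n ltnS ltnW.
      + by rewrite leqnn.
      move=> i j /andP[_ iA] /andP[Aj _] Pij.
      case: (leqP i A.-1) => iA1.
        by apply: (min_overlap Pij C (k := A.-1)); rewrite ?iA1 ?Aj ?aA1 ?leqnn.
      have iE : i = A by lia.
      subst i; case/minP: Pij => _ _ _; rewrite (gtn_eqF A0) XA ya1 /= => h.
      by move: (lt_trans h cmp); rewrite ltxx.
    - have C : is_min_flat (A + B) x A (b + A).
        apply/minP; split => //.
        + exact: leq_addl.
        + by rewrite addnC ltn_add2l.
        + move=> k /andP[ak kb].
          by rewrite XA -(subnK ak) Sx Hz // leq_subLR addnC kb.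
        + by rewrite (gtn_eqF A0) XA ya1 cmp.
        + by rewrite -addSn Sx XA addnC eqn_add2l.
      apply: (@sum2 (fun i j => is_min_flat (A + B) x i j) _ _ _ _ A (b + A)) => //.
      + by rewrite leq0n ltnS leqnn.
      + by rewrite addnC ltn_add2l bB andbT; lia.
      move=> i j /andP[_ iA] /andP[Aj _] Pij.
      have [ij _ Hx _ rx] := minP _ _ _ _ Pij.
      case: (leqP A j) => Aj'.
        by apply: (min_overlap Pij C (k := A)); rewrite ?Aj' ?leqnn /=; lia.
      have jE : j = A.-1 by lia.
      subst j; move: rx; rewrite eA AAB /= XA -(Hx A.-1) ?ij ?leqnn // ya1 => h.
      by move: (lt_trans h cmp); rewrite ltxx.
    - have C : is_min_flat (A + B) x a (b + A).
        apply/minP; split => //.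
        + by apply: leq_trans (ltnW aA') (leq_addl b A).
        + by rewrite addnC ltn_add2l.
        + move=> k /andP[ak kb]; rewrite xa; case: (ltnP k A) => kA.
            by rewrite Ex // Hy // ak /= -ltnS eA.
          by rewrite -(subnK kA) Sx Hz ?leq0n /= -?cmp ?yaE // leq_subLR addnC.
        + by rewrite xa xa1.
        + by rewrite -addSn Sx xa yaE cmp addnC eqn_add2l.
      apply: (@sum2 (fun i j => is_min_flat (A + B) x i j) _ _ _ _ a (b + A)) => //.
      + by rewrite leq0n ltnS ltnW.
      + by rewrite addnC ltn_add2l bB andbT; lia.
      move=> i j /andP[_ iA] /andP[Aj _] Pij.
      have [ij _ _ _ _] := minP _ _ _ _ Pij.
      by apply: (min_overlap Pij C (k := maxn i A.-1)); apply/andP; split; lia.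
  have AA2 : (A.-1 <= A <= A + B)%N by rewrite leq_pred leq_addr.
  under eq_big_nat => i /andP[Ai _].
    rewrite (big_cat_nat (leq_pred A) (leq_addr B A)) /=.
    rewrite [X in (X + _)%N]big1_seq ?add0n; last first.
      move=> j /andP[_]; rewrite mem_index_iota => /andP[_ jA].
      case Pij: is_min_flat => //; case/minP: Pij => ij _ _ _ _.
      have : (i < A)%N by apply: leq_ltn_trans ij jA.
      by rewrite ltnNge ltnW.
    over.
  rewrite /T2 -[A.+1]add1n big_addn addKn.
  apply: eq_big_nat => i /andP[i1 _].
  rewrite -{1}[A]add0n big_addn addKn.
  by apply: eq_big_nat => j _; rewrite (@min_shift A B x z i j Sx i1).
rewrite hX hY hZ; lia.

Qed.
End S.

Theorem mainTheorem7 (d : Order.disp_t) (T : orderType d) (A B : nat)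
    (y z : nat -> T) :
  (0 < A)%N -> (0 < B)%N ->
  (flat_at_is_min A y A.-1 -> flat_at_is_min B z 0 ->
     num_min (A + B) (glue A y z) = (num_min A y + num_min B z - 1)%N) /\
  (flat_at_is_max A y A.-1 -> flat_at_is_max B z 0 ->
     num_max (A + B) (glue A y z) = (num_max A y + num_max B z - 1)%N).
Proof.
move=> A0 B0.
have Ex : forall k, (k < A)%N -> glue A y z k = y k by move=> k kA; rewrite /glue kA.
have Sx : forall k, glue A y z (k + A) = z k.
  by move=> k; rewrite /glue ltnNge leq_addl /= addnK.
split => Hy Hz; first exact: main_min.
have E : forall n (x : nat -> T), num_max n x = @num_min _ (T^d) n x by [].
rewrite !E.
exact: (@main_min _ (T^d) A B (glue A y z) y z A0 B0 Ex Sx Hy Hz).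
Qed.
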